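(* Let $m\ge 2$, let $A$ be a real diagonal $n\times n$ matrix with $\|A\|=1$, and let $A_2,\dots,A_m$ be real symmetric $n\times n$ matrices such that $\langle A_\alpha,A_\beta\rangle=0$ for $\alpha\neq\beta$ and $\|A_2\|\geq\cdots\geq\|A_m\|$. Then \[ \sum_{\alpha=2}^m\|[A,A_\alpha]\|^2\leq \sum_{\alpha=2}^m\|A_\alpha\|^2+\|A_2\|^2 . \]
   Context: $\langle A,B\rangle=\sum_{i,j}a_{ij}b_{ij}$ is the Frobenius inner product, $\|A\|^2=\langle A,A\rangle$, and $[A,B]=AB-BA$. *)

(* Defs.v *)
From HB Require Import structures.
From mathcomp Require Import all_boot all_order all_algebra.
From mathcomp Require Import reals.
Set Implicit Arguments. Unset Strict Implicit. Unset Printing Implicit Defensive.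
Import Order.TTheory GRing.Theory Num.Theory.
Local Open Scope ring_scope.

Definition frob (R : realType) (n : nat) (A B : 'M[R]_n) : R :=
  \sum_(i < n) \sum_(j < n) A i j * B i j.

Definition fnorm (R : realType) (n : nat) (A : 'M[R]_n) : R :=
  Num.sqrt (frob A A).

Definition commut (R : realType) (n : nat) (A B : 'M[R]_n) : 'M[R]_n :=
  A *m B - B *m A.

(* Main.v *)
Require Import Defs.
From HB Require Import structures.
From mathcomp Require Import all_boot all_order all_algebra.
From mathcomp Require Import reals.
From mathcomp Require Import ring lra.
Import Order.TTheory GRing.Theory Num.Theory.
Local Open Scope ring_scope.

Lemma frobC {R : realType} {n} (A B : 'M[R]_n) : frob A B = frob B A.
Proof. by rewrite /frob; apply: eq_bigr => i _; apply: eq_bigr => j _; rewrite mulrC. Qed.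

Lemma frobDl {R : realType} {n} (A B C : 'M[R]_n) : frob (A + B) C = frob A C + frob B C.
Proof.
rewrite /frob -big_split; apply: eq_bigr => i _; rewrite -big_split.
by apply: eq_bigr => j _; rewrite !mxE mulrDl.
Qed.

Lemma frobZl {R : realType} {n} a (A C : 'M[R]_n) : frob (a *: A) C = a * frob A C.
Proof.
rewrite /frob mulr_sumr; apply: eq_bigr => i _; rewrite mulr_sumr.
by apply: eq_bigr => j _; rewrite !mxE mulrA.
Qed.

Lemma frobNl {R : realType} {n} (A C : 'M[R]_n) : frob (- A) C = - frob A C.
Proof. by rewrite -scaleN1r frobZl mulN1r. Qed.

Lemma frob_suml {R : realType} {n} (I : Type) (r : seq I) (F : I -> 'M[R]_n) C :
  frob (\sum_(a <- r) F a) C = \sum_(a <- r) frob (F a) C.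
Proof.
elim: r => [|x r IH]; first by rewrite !big_nil /frob big1 // => i _; rewrite big1 // => j _; rewrite mxE mul0r.
by rewrite !big_cons frobDl IH.
Qed.

Lemma frob_ge0 {R : realType} {n} (A : 'M[R]_n) : 0 <= frob A A.
Proof. by apply: sumr_ge0 => i _; apply: sumr_ge0 => j _; rewrite -expr2 sqr_ge0. Qed.

Lemma fnorm2 {R : realType} {n} (A : 'M[R]_n) : fnorm A ^+ 2 = frob A A.
Proof. by rewrite /fnorm sqr_sqrtr // frob_ge0. Qed.

Lemma fnorm_ge0 {R : realType} {n} (A : 'M[R]_n) : 0 <= fnorm A.
Proof. by rewrite /fnorm sqrtr_ge0. Qed.

Lemma frob_expand (R : realType) n (x y : R) (X Y : 'M[R]_n) :
  frob (x *: X - y *: Y) (x *: X - y *: Y) =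
  x ^+ 2 * frob X X - 2 * x * y * frob X Y + y ^+ 2 * frob Y Y.
Proof.
rewrite !frobDl !frobNl !frobZl (frobC X) (frobC Y) !frobDl !frobNl !frobZl.
rewrite (frobC Y X); ring.
Qed.

Lemma bessel (R : realType) n (Bs : nat -> 'M[R]_n) (r : seq nat) (L : R) (E : 'M[R]_n) :
  uniq r -> (forall a b, a \in r -> b \in r -> a != b -> frob (Bs a) (Bs b) = 0) ->
  (forall a, a \in r -> frob (Bs a) (Bs a) <= L) -> 0 <= L -> 0 < frob E E ->
  \sum_(a <- r) frob E (Bs a) ^+ 2 <= L * frob E E.
Proof.
move=> ur orth bnd L0 e0.
set c := fun a => frob E (Bs a).
set t := \sum_(a <- r) frob E (Bs a) ^+ 2.
set e := frob E E.
set M := \sum_(a <- r) c a *: Bs a.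
have hMM : frob M M = \sum_(a <- r) c a ^+ 2 * frob (Bs a) (Bs a).
  rewrite frob_suml; apply: eq_big_seq => a ar.
  rewrite frobZl frobC frob_suml (bigD1_seq a) //= big1_seq ?addr0.
    by rewrite frobZl; ring.
  move=> b /andP[ba br]; rewrite frobZl orth ?mulr0 //.
have hEM : frob E M = t.
  rewrite frobC frob_suml; apply: eq_bigr => a _; rewrite frobZl frobC /c; ring.
have hMMle : frob M M <= L * t.
  rewrite hMM /t mulr_sumr big_seq [X in _ <= X]big_seq; apply: ler_sum => a ar.
  by rewrite mulrC ler_wpM2r ?sqr_ge0 ?bnd.
have t0 : 0 <= t by apply: sumr_ge0 => a _; apply: sqr_ge0.
have h0 := frob_ge0 (e *: M - t *: E).
rewrite frob_expand (frobC M E) hEM -/e in h0.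
have h2 := mulr_ge0 (sqr_ge0 e) (eqbRL (subr_ge0 _ _) hMMle).
have h1 : 0 <= e * t * (e * L - t).
  have -> : e * t * (e * L - t) = (e ^+ 2 * frob M M - 2 * e * t * t + t ^+ 2 * e) + e ^+ 2 * (L * t - frob M M) by ring.
  exact: addr_ge0.
have [->|tp] := eqVneq t 0; first by rewrite mulr_ge0 // ltW.
have tp' : 0 < t by rewrite lt_def tp t0.
rewrite pmulr_rge0 ?mulr_gt0 // subr_ge0 in h1.
by rewrite mulrC.
Qed.

Lemma sdl {R : realType} {n} (i : 'I_n) (F : 'I_n -> R) :
  \sum_k (k == i)%:R * F k = F i.
Proof.
rewrite (bigD1 i) //= eqxx mul1r big1 ?addr0 // => k /negbTE ->; by rewrite mul0r.
Qed.

Lemma sdr {R : realType} {n} (i : 'I_n) (F : 'I_n -> R) :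
  \sum_k F k * (k == i)%:R = F i.
Proof. by rewrite -(sdl i F); apply: eq_bigr => k _; rewrite mulrC. Qed.

Lemma cauchy2 {R : realType} (a b x y : R) : 0 < x -> 0 < y ->
  (a - b) ^+ 2 <= (x + y) * (a ^+ 2 / x + b ^+ 2 / y).
Proof.
move=> x0 y0.
rewrite -subr_ge0.
have -> : (x + y) * (a ^+ 2 / x + b ^+ 2 / y) - (a - b) ^+ 2 = (a * y + b * x) ^+ 2 / (x * y).
  field; by rewrite ?gt_eqF.
by rewrite divr_ge0 ?sqr_ge0 // ltW // mulr_gt0.
Qed.

Lemma lap_bound {R : realType} {n} (tt : 'I_n -> 'I_n -> R) (d : 'I_n -> R) (S L : R) :
  (forall i j, tt i j = tt j i) -> (forall i j, 0 <= tt i j) -> (forall i, tt i i = 0) ->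
  (forall i j, i != j -> 2 * tt i j <= L) -> \sum_i \sum_j tt i j <= S -> 0 <= L ->
  \sum_i d i ^+ 2 = 1 ->
  \sum_i \sum_j (d i - d j) ^+ 2 * tt i j <= S + L.
Proof.
move=> tsym t0 tdiag tL tS L0 d1.
pose Rr i := \sum_k tt i k.
have Rge i j : tt i j <= Rr i.
  by rewrite /Rr (bigD1 j) //= lerDl sumr_ge0.
have Rr0 i : 0 <= Rr i by apply: sumr_ge0.
have S0 : 0 <= S by apply: le_trans tS; apply: sumr_ge0 => i _; apply: sumr_ge0.
have key i j : i != j -> 2 * (Rr i + Rr j) <= S + L.
  move=> hij.
  have e1 k : Rr k = \sum_a \sum_b tt a b * (a == k)%:R.
    rewrite /Rr -(sdr k (fun a => \sum_b tt a b)) /=.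
    by apply: eq_bigr => a _; rewrite mulr_suml.
  have e2 k : Rr k = \sum_a \sum_b tt a b * (b == k)%:R.
    rewrite /Rr; under [RHS]eq_bigr do rewrite sdr.
    by apply: eq_bigr => a _; rewrite tsym.
  have -> : 2 * (Rr i + Rr j) = \sum_a \sum_b tt a b * ((a == i)%:R + (b == i)%:R + (a == j)%:R + (b == j)%:R).
    rewrite mulr2n mulrDl mul1r.
    have -> : Rr i + Rr j + (Rr i + Rr j) = Rr i + Rr i + Rr j + Rr j by ring.
    rewrite {1}e1 {1}e2 {1}e1 e2 -!big_split /=; apply: eq_bigr => a _.
    rewrite -!big_split /=; apply: eq_bigr => b _; ring.
  apply: (@le_trans _ _ (\sum_a \sum_b (tt a b + (a == i)%:R * ((b == j)%:R * tt a b) + (a == j)%:R * ((b == i)%:R * tt a b)))).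
  { apply: ler_sum => a _; apply: ler_sum => b _.
    have ta := t0 a b.
    have [hab|hab] := eqVneq a b.
      subst; rewrite tdiag !mul0r !mulr0 !addr0; done.
    case: (eqVneq a i) => ai; case: (eqVneq b i) => bi; case: (eqVneq a j) => aj; case: (eqVneq b j) => bj.
    all: try (subst; by rewrite eqxx in hab).
    all: try (subst; by rewrite eqxx in hij).
    all: rewrite /= ?mul0r ?mul1r ?mulr0 ?mulr1 ?addr0 ?add0r; lra. }
  have -> : \sum_a \sum_b (tt a b + (a == i)%:R * ((b == j)%:R * tt a b) + (a == j)%:R * ((b == i)%:R * tt a b))
     = \sum_a \sum_b tt a b + tt i j + tt j i.
    rewrite -(sdl i (fun a => tt a j)) -(sdl j (fun a => tt a i)) -!big_split /=.
    apply: eq_bigr => a _; rewrite !big_split /= -!mulr_sumr.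
    by rewrite (sdl j (fun b => tt a b)) (sdl i (fun b => tt a b)).
  rewrite (tsym j i) -addrA.
  have := tL i j hij; lra.
pose K := (S + L) / 2.
have K0 : 0 <= K by rewrite divr_ge0 // addr_ge0.
have pw i j : (d i - d j) ^+ 2 * tt i j <= K * (tt i j * (d i ^+ 2 / Rr i) + tt i j * (d j ^+ 2 / Rr j)).
  have [hij|hij] := eqVneq i j.
    subst; rewrite subrr expr0n /= mul0r; apply: mulr_ge0 => //.
    by apply: addr_ge0; apply: mulr_ge0 => //; apply: divr_ge0 => //; apply: sqr_ge0.
  have [w0|wp] := eqVneq (tt i j) 0; first by rewrite w0 !mul0r mulr0 addr0 mulr0.
  have wpos : 0 < tt i j by rewrite lt_def wp t0.
  have xpos : 0 < Rr i by apply: lt_le_trans wpos (Rge i j).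
  have ypos : 0 < Rr j by rewrite tsym in wpos; apply: lt_le_trans wpos (Rge j i).
  have kk := key i j hij.
  have c := @cauchy2 _ (d i) (d j) _ _ xpos ypos.
  have pq0 : 0 <= d i ^+ 2 / Rr i + d j ^+ 2 / Rr j.
    by apply: addr_ge0; apply: divr_ge0; rewrite ?sqr_ge0 ?ltW.
  have c2 : (Rr i + Rr j) * (d i ^+ 2 / Rr i + d j ^+ 2 / Rr j) <= K * (d i ^+ 2 / Rr i + d j ^+ 2 / Rr j).
    apply: ler_wpM2r => //; rewrite /K; lra.
  have -> : K * (tt i j * (d i ^+ 2 / Rr i) + tt i j * (d j ^+ 2 / Rr j)) = K * (d i ^+ 2 / Rr i + d j ^+ 2 / Rr j) * tt i j by ring.
  by apply: ler_wpM2r; rewrite ?t0 //; apply: le_trans c c2.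
apply: le_trans (ler_sum _ (fun i _ => ler_sum _ (fun j _ => pw i j))) _.
under eq_bigr do rewrite -mulr_sumr big_split /=.
rewrite -mulr_sumr big_split /= [X in _ * (_ + X)]exchange_big /=.
have hb : forall i, \sum_j tt i j * (d i ^+ 2 / Rr i) <= d i ^+ 2.
  move=> i; rewrite -mulr_suml -/(Rr i) mulrC.
  have [->|rp] := eqVneq (Rr i) 0; first by rewrite mulr0 sqr_ge0.
  by rewrite divfK.
have hb2 : forall j, \sum_i tt i j * (d j ^+ 2 / Rr j) <= d j ^+ 2.
  move=> j; rewrite (eq_bigr (fun i => tt j i * (d j ^+ 2 / Rr j))); first exact: hb.
  by move=> i _; rewrite tsym.
have X1 : \sum_i \sum_j tt i j * (d i ^+ 2 / Rr i) <= 1.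
  by rewrite -d1; apply: ler_sum => i _; apply: hb.
have X2 : \sum_j \sum_i tt i j * (d j ^+ 2 / Rr j) <= 1.
  by rewrite -d1; apply: ler_sum => i _; apply: hb2.
apply: le_trans (ler_wpM2l K0 (lerD X1 X2)) _.
rewrite /K; lra.
Qed.

Lemma frob_delta {R : realType} {n} (i j : 'I_n) (B : 'M[R]_n) :
  frob (delta_mx i j) B = B i j.
Proof.
rewrite /frob -(sdl i (fun k => B k j)); apply: eq_bigr => k _.
rewrite -(sdl j (fun l => B k l)) mulr_sumr; apply: eq_bigr => l _.
by rewrite mxE -mulnb natrM /=; ring.
Qed.

Lemma diag_mulE {R : realType} {n} (A B : 'M[R]_n) i j : is_diag_mx A ->
  (A *m B) i j = A i i * B i j /\ (B *m A) i j = B i j * A j j.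
Proof.
move=> /is_diag_mxP hA; split; rewrite mxE.
  rewrite (bigD1 i) //= big1 ?addr0 // => k ki.
  by rewrite hA ?mul0r // eq_sym.
rewrite (bigD1 j) //= big1 ?addr0 // => k kj.
by rewrite hA ?mulr0.
Qed.

Lemma frob_diag {R : realType} {n} (A : 'M[R]_n) : is_diag_mx A ->
  frob A A = \sum_i A i i ^+ 2.
Proof.
move=> /is_diag_mxP hA; rewrite /frob; apply: eq_bigr => i _.
rewrite (bigD1 i) //= big1 ?addr0 ?expr2 // => k ki.
by rewrite hA ?mul0r // eq_sym.
Qed.

Theorem mainTheorem5 (R : realType) (n m : nat) (A : 'M[R]_n)
  (As : nat -> 'M[R]_n) :
  (2 <= m)%N ->
  is_diag_mx A ->
  fnorm A = 1 ->
  (forall a : nat, (2 <= a <= m)%N -> (As a)^T = As a) ->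
  (forall a b : nat, (2 <= a <= m)%N -> (2 <= b <= m)%N -> a <> b ->
     frob (As a) (As b) = 0) ->
  (forall a b : nat, (2 <= a)%N -> (a <= b <= m)%N ->
     fnorm (As b) <= fnorm (As a)) ->
  \sum_(2 <= a < m.+1) fnorm (commut A (As a)) ^+ 2
    <= \sum_(2 <= a < m.+1) fnorm (As a) ^+ 2 + fnorm (As 2%N) ^+ 2.
Proof.
move=> m2 Ad A1 Hsym Horth Hord.
pose d i := A i i.
pose t (i j : 'I_n) := \sum_(2 <= a < m.+1) As a i j ^+ 2.
pose tt (i j : 'I_n) := if i == j then 0 else t i j.
pose S := \sum_(2 <= a < m.+1) fnorm (As a) ^+ 2.
pose L := fnorm (As 2%N) ^+ 2.
have L0 : 0 <= L by rewrite sqr_ge0.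
have memr a : (a \in index_iota 2 m.+1) = (2 <= a <= m)%N by rewrite mem_index_iota ltnS.
have symA a i j : (2 <= a < m.+1)%N -> As a i j = As a j i.
  move=> /andP[a2 am]; rewrite ltnS in am.
  by rewrite -{1}(Hsym a (introT andP (conj a2 am))) mxE.
have tsym' i j : t i j = t j i.
  by apply: eq_big_nat => a ha; rewrite symA.
have orth a b : a \in index_iota 2 m.+1 -> b \in index_iota 2 m.+1 -> a != b -> frob (As a) (As b) = 0.
  by rewrite !memr => ha hb /eqP hab; apply: Horth.
have tsym i j : tt i j = tt j i by rewrite /tt eq_sym tsym'.
have t0' i j : 0 <= t i j by apply: sumr_ge0 => a _; apply: sqr_ge0.
have t0 i j : 0 <= tt i j by rewrite /tt; case: eqP.
have tdiag i : tt i i = 0 by rewrite /tt eqxx.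
have bnd a : a \in index_iota 2 m.+1 -> frob (As a) (As a) <= L.
  rewrite memr => /andP[a2 am].
  have h := Hord 2%N a (leqnn 2) (introT andP (conj a2 am)).
  rewrite /L -fnorm2.
  have := fnorm_ge0 (As a); nra.
have tL i j : i != j -> 2 * tt i j <= L.
  move=> hij; rewrite /tt (negbTE hij).
  pose E := delta_mx i j + delta_mx j i : 'M[R]_n.
  have hE B : frob E B = B i j + B j i by rewrite frobDl !frob_delta.
  have hEE : frob E E = 2.
    rewrite hE !mxE !eqxx /= (negbTE hij) eq_sym (negbTE hij) /=; ring.
  have two0 : (0:R) < 2 by lra.
  have := @bessel R n As (index_iota 2 m.+1) L E (iota_uniq _ _) orth bnd L0.
  rewrite hEE => /(_ two0).
  have -> : \sum_(2 <= a < m.+1) frob E (As a) ^+ 2 = 4 * t i j.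
    rewrite /t mulr_sumr; apply: eq_big_nat => a ha; rewrite hE (symA a j i ha); ring.
  lra.
have ce a i j : commut A (As a) i j = (d i - d j) * As a i j.
  have [h1 h2] := diag_mulE A (As a) i j Ad.
  rewrite /commut mxE [X in _ + X]mxE h1 h2 /d; ring.
have tS : \sum_i \sum_j tt i j <= S.
  apply: (@le_trans _ _ (\sum_i \sum_j t i j)).
    apply: ler_sum => i _; apply: ler_sum => j _; rewrite /tt; case: eqP => // _.
  rewrite /t; under eq_bigr do rewrite exchange_big /=.
  rewrite exchange_big /= /S le_eqVlt; apply/orP; left; apply/eqP.
  apply: eq_bigr => a _; rewrite fnorm2 /frob.
  by apply: eq_bigr => i _; apply: eq_bigr => j _; rewrite expr2.
have d1 : \sum_i d i ^+ 2 = 1.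
  by rewrite -(frob_diag A Ad) -fnorm2 A1 expr1n.
have -> : \sum_(2 <= a < m.+1) fnorm (commut A (As a)) ^+ 2 = \sum_i \sum_j (d i - d j) ^+ 2 * tt i j.
  under eq_bigr do rewrite fnorm2 /frob.
  rewrite exchange_big; apply: eq_bigr => i _; rewrite exchange_big; apply: eq_bigr => j _.
  have -> : (d i - d j) ^+ 2 * tt i j = (d i - d j) ^+ 2 * t i j.
    rewrite /tt; case: eqVneq => [->|//]; by rewrite subrr expr0n !mul0r.
  rewrite /t mulr_sumr; apply: eq_bigr => a _; rewrite ce; ring.
exact: (@lap_bound _ _ tt d S L tsym t0 tdiag tL tS L0 d1).
Qed.
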